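(* Assume the sponge $F\subset[0,1]^d$ satisfies the SPPC. Then for all $\mathbf i\in\Sigma$ and $r>0$, $\pi(B_{\mathbf i}(r))\subseteq B(\pi(\mathbf i),\sqrt d\,r)$. Moreover, if $F$ satisfies the very strong SPPC and $\delta_0>0$ is a constant such that for every $\sigma\in\mathcal A$, $1\le n\le d$ and $i,j\in\mathcal I$ for which $f_i,f_j$ do not overlap exactly on $E_n^\sigma$ one has $\mathrm{dist}\big(\Pi_n^\sigma(f_i([0,1]^d)),\Pi_n^\sigma(f_j([0,1]^d))\big)\ge\delta_0$, then for all $\mathbf i\in\Sigma$ and $r>0$, $B(\pi(\mathbf i),\delta_0r)\cap F\subseteq\pi(B_{\mathbf i}(r))$.
   Context: Setting: $\mathcal I=\{1,\dots,N\}$, $f_i(x)=A_ix+t_i$ on $\mathbb R^d$ with $A_i=\mathrm{diag}(\lambda_i^{(1)},\dots,\lambda_i^{(d)})$, all $\lambda_i^{(n)}\in(0,1)$, $f_i([0,1]^d)\subset[0,1]^d$, no two maps agree on $[0,1]^d$, and for all $m\ne n$ some $i$ has $\lambda_i^{(n)}\ne\lambda_i^{(m)}$; $F$ is the attractor. $\Sigma=\mathcal I^{\mathbb N}$, $\pi(\mathbf i)=\lim_kf_{i_1}\circ\cdots\circ f_{i_k}(0)$; $B(x,\rho)$ is the Euclidean ball. For $\mathbf i\in\Sigma$, $r>0$, $L_{\mathbf i}(r,n)$ is the unique integer with $\prod_{\ell=1}^{L_{\mathbf i}(r,n)}\lambda_{i_\ell}^{(n)}\le r<\prod_{\ell=1}^{L_{\mathbf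 i}(r,n)-1}\lambda_{i_\ell}^{(n)}$. $\mathbf i$ determines a $\sigma$-ordered cube at scale $r$ if $L_{\mathbf i}(r,\sigma_d)\le\dots\le L_{\mathbf i}(r,\sigma_1)$, ties resolved by: if coordinates $k<m$ have $L_{\mathbf i}(r,k)=L_{\mathbf i}(r,m)$ then $k$ precedes $m$ iff $\prod_{\ell=1}^{L_{\mathbf i}(r,k)}\lambda_{i_\ell}^{(k)}\ge\prod_{\ell=1}^{L_{\mathbf i}(r,k)}\lambda_{i_\ell}^{(m)}$; write $\sigma_{\mathbf i}(r)$ for it, and $\mathcal A$ for the set of all orderings so arising. $E_n^\sigma$: span of coordinate axes $\sigma_1,\dots,\sigma_n$, $\Pi_n^\sigma$ the orthogonal projection onto it; $f_i,f_j$ overlap exactly on $E_n^\sigma$ if $\Pi_n^\sigma f_i=\Pi_n^\sigma f_j$ on $[0,1]^d$. SPPC: for all $\sigma\in\mathcal A$, $1\le n\le d$, $i,j$, either $f_i,f_j$ overlap exactly on $E_n^\sigma$ or $\Pi_n^\sigma(f_i((0,1)^d))\cap\Pi_n^\sigma(f_j((0,1)^d))=\emptyset$; very strong SPPC: the same with $[0,1]^d$ in place of $(0,1)^d$. For $1\le n\le d-1$, $\mathcal I_n^\sigma$ is the set of $j$ such that no $i<j$ overlaps exactly with $j$ on $E_n^\sigma$; $\mathcal I_d^\sigma=\mathcal I$; $\Pi_n^\sigma j$ (on indices) is the unique element of $\mathcal I_n^\sigma$ overlapping exactly with $j$ on $E_n^\sigma$, extended to $\Sigma$ coordinatewise. $B_{\mathbf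 i}(r)=\{\mathbf j\in\Sigma:|\Pi_n^\sigma\mathbf j\wedge\Pi_n^\sigma\mathbf i|\ge L_{\mathbf i}(r,\sigma_n)\ \forall n\}$ with $\sigma=\sigma_{\mathbf i}(r)$ and $\wedge$ the longest common prefix. *)

(* Defs.v *)
From HB Require Import structures.
From mathcomp Require Import all_boot all_order all_algebra all_fingroup.
From mathcomp Require Import all_classical all_reals all_analysis.
Set Implicit Arguments. Unset Strict Implicit. Unset Printing Implicit Defensive.
Import Order.TTheory GRing.Theory Num.Theory numFieldNormedType.Exports.
Local Open Scope classical_set_scope.
Local Open Scope ring_scope.

Section Sponge.
Variables (R : realType) (N d : nat).
(* lam i k = lambda_i^{(k)}, t i k = k-th coordinate of the translation t_i *)
Variables (lam t : 'I_N -> 'I_d -> R).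

Local Notation point := ('I_d -> R).
(* the symbolic space Sigma = I^N; sequence index 0 is i_1 *)
Local Notation word := (nat -> 'I_N).

Definition fmap (i : 'I_N) (x : point) : point := fun k => lam i k * x k + t i k.

Definition cube : set point := [set x | forall k, 0 <= x k <= 1].
Definition ocube : set point := [set x | forall k, 0 < x k < 1].

Definition enorm (x : point) : R := Num.sqrt (\sum_(k < d) x k ^+ 2).
Definition ball_e (x : point) (rho : R) : set point :=
  [set y | enorm (fun k => y k - x k) <= rho].

(* f_{i_1} o ... o f_{i_k} (x) *)
Fixpoint comp (w : word) (k : nat) (x : point) : point :=
  match k with
  | 0%N => x
  | k'.+1 => comp w k' (fmap (w k') x)
  end.

(* the natural projection pi(w) = lim_k f_{i_1} o ... o f_{i_k} (0),
   limit in R^d taken coordinatewise *)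
Definition pi_map (w : word) : point :=
  fun c => limn (fun k => comp w k (fun _ => 0) c).

Definition is_attractor (F : set point) : Prop :=
  F !=set0 /\ compact (F : set {ptws 'I_d -> R}) /\ F = \bigcup_(i in [set: 'I_N]) (fmap i @` F).

Definition sponge_hyp : Prop :=
  (forall i k, 0 < lam i k < 1) /\
  (forall i, fmap i @` cube `<=` cube) /\
  (forall i j : 'I_N, i != j -> ~ (forall x, cube x -> fmap i x = fmap j x)) /\
  (forall m n : 'I_d, m != n -> exists i, lam i n != lam i m).

Definition prodL (w : word) (k : 'I_d) (L : nat) : R := \prod_(l < L) lam (w l) k.

(* L_w(r,k): the least L with prod_{l=1}^L lambda^{(k)}_{i_l} <= r
   (for r < 1 this is the unique L with prod_{1}^{L} <= r < prod_{1}^{L-1}) *)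
Definition Lnum (w : word) (r : R) (k : 'I_d) : nat :=
  match pselect (exists L, prodL w k L <= r) with
  | left h => ex_minn h
  | right _ => 0%N
  end.

(* "coordinate k precedes coordinate m" in the ordering sigma_w(r) *)
Definition prec (w : word) (r : R) (k m : 'I_d) : bool :=
  (Lnum w r m < Lnum w r k)%N ||
  ((Lnum w r k == Lnum w r m) &&
   ( ((k < m)%N && (prodL w m (Lnum w r k) <= prodL w k (Lnum w r k)))
  || ((m < k)%N && ~~ (prodL w k (Lnum w r m) <= prodL w m (Lnum w r m))))).

(* w determines a sigma-ordered cube at scale r (sigma_1 = s 0, ..., sigma_d = s (d-1)) *)
Definition sigma_ordered (w : word) (r : R) (s : {perm 'I_d}) : bool :=
  [forall a : 'I_d, forall b : 'I_d, (a < b)%N ==> prec w r (s a) (s b)].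

Definition sigma_of (w : word) (r : R) : {perm 'I_d} :=
  odflt 1%g [pick s : {perm 'I_d} | sigma_ordered w r s].

Definition Acal : set {perm 'I_d} :=
  [set s | exists (w : word) (r : R), 0 < r /\ sigma_of w r = s].

Definition inE_ (s : {perm 'I_d}) (n : nat) (k : 'I_d) : bool :=
  [exists a : 'I_d, (a < n)%N && (s a == k)].

Definition projE (s : {perm 'I_d}) (n : nat) (x : point) : point :=
  fun k => if inE_ s n k then x k else 0.

Definition overlap (s : {perm 'I_d}) (n : nat) (i j : 'I_N) : Prop :=
  forall x, cube x -> projE s n (fmap i x) = projE s n (fmap j x).

Definition SPPC : Prop :=
  forall s, Acal s -> forall n, (1 <= n <= d)%N -> forall i j : 'I_N,
    overlap s n i j \/
    (projE s n \o fmap i) @` ocube `&` (projE s n \o fmap j) @` ocube = set0.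

Definition very_strong_SPPC : Prop :=
  forall s, Acal s -> forall n, (1 <= n <= d)%N -> forall i j : 'I_N,
    overlap s n i j \/
    (projE s n \o fmap i) @` cube `&` (projE s n \o fmap j) @` cube = set0.

Definition sep_const (delta0 : R) : Prop :=
  forall s, Acal s -> forall n, (1 <= n <= d)%N -> forall i j : 'I_N,
    ~ overlap s n i j ->
    forall x y, cube x -> cube y ->
      delta0 <= enorm (fun k => projE s n (fmap i x) k - projE s n (fmap j y) k).

Definition Iset (s : {perm 'I_d}) (n : nat) (j : 'I_N) : bool :=
  if (n < d)%N then [forall i : 'I_N, (i < j)%N ==> ~~ `[< overlap s n i j >]]
  else true.

Definition projIdx (s : {perm 'I_d}) (n : nat) (j : 'I_N) : 'I_N :=
  odflt j [pick i : 'I_N | Iset s n i && `[< overlap s n i j >]].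

Definition projW (s : {perm 'I_d}) (n : nat) (w : word) : word :=
  fun l => projIdx s n (w l).

(* |u ^ v| >= L : u and v agree on their first L symbols *)
Definition prefix_ge (u v : word) (L : nat) : Prop :=
  forall l, (l < L)%N -> u l = v l.

Definition Bset (w : word) (r : R) : set word :=
  [set v | forall a : 'I_d,
     prefix_ge (projW (sigma_of w r) a.+1 v) (projW (sigma_of w r) a.+1 w)
               (Lnum w r (sigma_of w r a))].

End Sponge.

(* Main.v *)
From HB Require Import structures.
From mathcomp Require Import all_boot all_order all_algebra all_fingroup.
From mathcomp Require Import all_classical all_reals all_analysis.
Require Import Defs.
From mathcomp Require Import ring lra zify.
Import Order.TTheory GRing.Theory Num.Theory numFieldNormedType.Exports.
Local Open Scope classical_set_scope.
Local Open Scope ring_scope.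
Set Implicit Arguments. Unset Strict Implicit.

Lemma prodLS (R : realType) (N d : nat) (lam : 'I_N -> 'I_d -> R) w k l :
  prodL lam w k l.+1 = prodL lam w k l * lam (w l) k.
Proof. by rewrite /prodL big_ord_recr. Qed.

Lemma prodL0 (R : realType) (N d : nat) (lam : 'I_N -> 'I_d -> R) w k :
  prodL lam w k 0 = 1.
Proof. by rewrite /prodL big_ord0. Qed.

Lemma comp_coord (R : realType) (N d : nat) (lam t : 'I_N -> 'I_d -> R) w l x k :
  comp lam t w l x k = prodL lam w k l * x k + comp lam t w l (fun _ => 0) k.
Proof.
elim: l x => [|l IH] x /=; first by rewrite prodL0 mul1r addr0.
rewrite IH [comp _ _ _ l (fmap _ _ _ _) k]IH prodLS /fmap; ring.
Qed.

Lemma comp_add (R : realType) (N d : nat) (lam t : 'I_N -> 'I_d -> R) w k m x :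
  comp lam t w (k + m) x = comp lam t w k (comp lam t (fun l => w (k + l)%N) m x).
Proof.
elim: m x => [|m IH] x /=; first by rewrite addn0.
by rewrite addnS /= IH.
Qed.

Lemma comp_cube (R : realType) (N d : nat) (lam t : 'I_N -> 'I_d -> R) w l x :
  (forall i, fmap lam t i @` (@cube R d) `<=` (@cube R d)) -> (@cube R d) x -> (@cube R d) (comp lam t w l x).
Proof.
move=> H; elim: l x => [|l IH] x cx //=.
apply: IH; apply: (H (w l)); by exists x.
Qed.

Lemma t_ge0 (R : realType) (N d : nat) (lam t : 'I_N -> 'I_d -> R) i k :
  (forall i, fmap lam t i @` (@cube R d) `<=` (@cube R d)) -> 0 <= t i k.
Proof.
move=> H.
have c0 : (@cube R d) (fun _ : 'I_d => (0:R)) by move=> j; rewrite lexx ler01.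
have /(_ k) := H i _ (ex_intro2 _ _ _ c0 erefl).
by rewrite /fmap mulr0 add0r => /andP[].
Qed.

Lemma prodL_gt0 (R : realType) (N d : nat) (lam : 'I_N -> 'I_d -> R) w k l :
  (forall i k, 0 < lam i k < 1) -> 0 < prodL lam w k l.
Proof.
move=> H; rewrite /prodL; apply: prodr_gt0 => i _.
by case/andP: (H (w i) k).
Qed.

Definition shiftw (N : nat) (w : nat -> 'I_N) (k : nat) : nat -> 'I_N :=
  fun l => w (k + l)%N.

Lemma pi_props (R : realType) (N d : nat) (lam t : 'I_N -> 'I_d -> R) w c :
  (forall i k, 0 < lam i k < 1) ->
  (forall i, fmap lam t i @` (@cube R d) `<=` (@cube R d)) ->
  [/\ cvgn (fun m => comp lam t w m (fun _ => 0) c),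
      0 <= pi_map lam t w c <= 1 &
      forall m, comp lam t w m (fun _ => 0) c <= pi_map lam t w c].
Proof.
move=> Hl Hc.
set u := fun m => comp lam t w m (fun _ => 0) c.
have c0 : (@cube R d) (fun _ : 'I_d => (0:R)) by move=> j; rewrite lexx ler01.
have u01 m : 0 <= u m <= 1 := @comp_cube R N d lam t w m _ Hc c0 c.
have hom : {homo u : n m / (n <= m)%N >-> n <= m}.
  apply/nondecreasing_seqP => n.
  rewrite /u /= [X in _ <= X]comp_coord /fmap /= mulr0 add0r lerDr.
  apply: mulr_ge0; [exact: (ltW (prodL_gt0 w c n Hl))|exact: t_ge0].
have cv : cvgn u.
  apply: nondecreasing_is_cvgn => //; exists 1 => _ [m _ <-].
  by case/andP: (u01 m).
have le := nondecreasing_cvgn_le hom cv.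
split => //; apply/andP; split.
  by apply: le_trans (le 0%N); case/andP: (u01 0%N).
apply: limr_le => //; apply: nearW => m; by case/andP: (u01 m).
Qed.

Lemma pi_shift (R : realType) (N d : nat) (lam t : 'I_N -> 'I_d -> R) w c k :
  (forall i k, 0 < lam i k < 1) ->
  (forall i, fmap lam t i @` (@cube R d) `<=` (@cube R d)) ->
  pi_map lam t w c = prodL lam w c k * pi_map lam t (shiftw w k) c
                     + comp lam t w k (fun _ => 0) c.
Proof.
move=> Hl Hc.
have [cu _ _] := pi_props w c Hl Hc.
have [cv _ _] := pi_props (shiftw w k) c Hl Hc.
set u := fun m => comp lam t w m (fun _ => 0) c in cu.
set v := fun m => comp lam t (shiftw w k) m (fun _ => 0) c in cv.
have h1 : (fun m => u (m + k)%N) @ \oo --> limn u by rewrite cvg_shiftn.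
have e : (fun m => u (m + k)%N) = (fun m => prodL lam w c k * v m + comp lam t w k (fun _ => 0) c).
  apply: funext => m; rewrite /u /v addnC comp_add comp_coord //.
have h2 : (fun m => u (m + k)%N) @ \oo --> prodL lam w c k * limn v + comp lam t w k (fun _ => 0) c.
  rewrite e; apply: cvgD; last exact: cvg_cst.
  apply: cvgM; [exact: cvg_cst| exact: cv].
exact: (cvg_unique _ h1 h2).
Qed.

Lemma geom_small (R : realType) (M e : R) : 0 <= M < 1 -> 0 < e -> exists n, M ^+ n < e.
Proof.
move=> /andP[M0 M1] e0.
have := @cvg_expr R M.
rewrite ger0_norm // => /(_ M1) /cvgr0_norm_lt /(_ _ e0) [n _ Hn].
exists n. have := Hn n (leqnn n). by rewrite /= ger0_norm ?exprn_ge0.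
Qed.

Lemma prodL_small (R : realType) (N d : nat) (lam : 'I_N -> 'I_d -> R) w k e :
  (forall i k, 0 < lam i k < 1) -> 0 < e -> exists L, prodL lam w k L <= e.
Proof.
move=> Hl e0.
pose M := \big[Order.max/0]_i lam i k.
have M0 : 0 <= M.
  rewrite /M; elim/big_ind: _ => [//| x y x0 y0 | i _].
    by rewrite le_max x0.
  by case/andP: (Hl i k) => /ltW.
have M1 : M < 1.
  rewrite /M; apply: bigmax_lt => //= i _; by case/andP: (Hl i k).
have HM : forall L, prodL lam w k L <= M ^+ L.
  elim=> [|L IH]; first by rewrite prodL0 expr0.
  rewrite prodLS exprSr; apply: ler_pM => //.
    exact: ltW (prodL_gt0 w k L Hl).
    by case/andP: (Hl (w L) k) => /ltW.
  exact: (le_bigmax 0 (fun i => lam i k) (w L)).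
have [n Hn] := geom_small (M:=M) (e:=e) (introT andP (conj M0 M1)) e0.
by exists n; apply: le_trans (HM n) (ltW Hn).
Qed.

Lemma Lnum_le (R : realType) (N d : nat) (lam : 'I_N -> 'I_d -> R) w r k :
  (forall i k, 0 < lam i k < 1) -> 0 < r -> prodL lam w k (Lnum lam w r k) <= r.
Proof.
move=> Hl r0; rewrite /Lnum; case: pselect => [h|h].
  by case: ex_minnP.
by exfalso; apply: h; exact: prodL_small.
Qed.

Lemma Lnum_min (R : realType) (N d : nat) (lam : 'I_N -> 'I_d -> R) w r k l :
  (l < Lnum lam w r k)%N -> r < prodL lam w k l.
Proof.
rewrite /Lnum; case: pselect => [h|h] //.
case: ex_minnP => m _ Hm lm.
rewrite ltNge; apply/negP => Hle.
by have := Hm l Hle; rewrite leqNgt lm.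
Qed.

Lemma ov_trans (R : realType) (N d : nat) (lam t : 'I_N -> 'I_d -> R) s n i j k :
  overlap lam t s n i j -> overlap lam t s n j k -> overlap lam t s n i k.
Proof. by move=> h1 h2 x cx; rewrite h1 // h2. Qed.

Lemma ov_sym (R : realType) (N d : nat) (lam t : 'I_N -> 'I_d -> R) s n i j :
  overlap lam t s n i j -> overlap lam t s n j i.
Proof. by move=> h1 x cx; rewrite h1. Qed.

Lemma ov_refl (R : realType) (N d : nat) (lam t : 'I_N -> 'I_d -> R) s n i :
  overlap lam t s n i i.
Proof. by []. Qed.

Lemma ov_coord (R : realType) (N d : nat) (lam t : 'I_N -> 'I_d -> R) s n i j k :
  overlap lam t s n i j -> inE_ s n k -> lam i k = lam j k /\ t i k = t j k.
Proof.
move=> h kE.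
have c0 : (@cube R d) (fun _ => 0) by move=> m; rewrite lexx ler01.
have c1 : (@cube R d) (fun _ => 1) by move=> m; rewrite lexx ler01.
have /(congr1 (fun f => f k)) := h _ c0.
have /(congr1 (fun f => f k)) := h _ c1.
rewrite /projE kE /fmap !mulr0 !mulr1 !add0r => e1 e2.
by split => //; rewrite -e2 in e1; apply: (addIr (t i k)).
Qed.

Lemma projIdx_ov (R : realType) (N d : nat) (lam t : 'I_N -> 'I_d -> R) s n j :
  overlap lam t s n (projIdx lam t s n j) j.
Proof.
rewrite /projIdx; case: pickP => [i /andP[_ /asboolP h] | _] //=.
Qed.

Lemma projIdx_eq (R : realType) (N d : nat) (lam t : 'I_N -> 'I_d -> R) s n i j :
  overlap lam t s n i j -> projIdx lam t s n i = projIdx lam t s n j.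
Proof.
move=> hij.
have ex : exists m, Iset lam t s n m && `[< overlap lam t s n m j >].
  case: (@arg_minnP _ j (fun x => `[< overlap lam t s n x j >]) (fun x => nat_of_ord x)).
    by apply/asboolP.
  move=> m /asboolP hm hmin; exists m; apply/andP; split; last by apply/asboolP.
  rewrite /Iset; case: ifP => // _.
  apply/forallP => x; apply/implyP => lt; apply/negP => /asboolP ov.
  have := hmin x (introT (asboolP _) (ov_trans ov hm)).
  by rewrite leqNgt lt.
rewrite /projIdx.
rewrite (@eq_pick _ _ (fun x => Iset lam t s n x && `[< overlap lam t s n x j >])); last first.
  move=> x /=; congr (_ && _).
  apply/idP/idP => /asboolP h; apply/asboolP.
    exact: ov_trans h hij.
  exact: ov_trans h (ov_sym hij).
case: pickP => [x _ //|none].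
by case: ex => m; rewrite none.
Qed.

Definition lexrel (R : realType) (d : nat) (L : 'I_d -> nat) (P : 'I_d -> R) (k m : 'I_d) : bool :=
  (L m < L k)%N || ((L k == L m) && ((P m < P k) || ((P m == P k) && (k < m)%N))).

Lemma precE (R : realType) (N d : nat) (lam : 'I_N -> 'I_d -> R) w r k m :
  prec lam w r k m = lexrel (Lnum lam w r) (fun x => prodL lam w x (Lnum lam w r x)) k m.
Proof.
rewrite /prec /lexrel; case: eqP => e /=; last by [].
rewrite e; congr (_ || _).
case: (ltngtP k m) => h /=.
- by rewrite andbT le_eqVlt /= orbF orbC.
- by rewrite andbF orbF ltNge.
- have km : k = m by apply: val_inj.
  by subst; rewrite ltxx andbF.
Qed.

Lemma lex_trans (R : realType) (d : nat) (L : 'I_d -> nat) (P : 'I_d -> R) a b c :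
  lexrel L P a b -> lexrel L P b c -> lexrel L P a c.
Proof.
rewrite /lexrel.
case/orP => [h1 | /andP[/eqP e1 h1]]; case/orP => [h2 | /andP[/eqP e2 h2]].
- by rewrite (ltn_trans h2 h1).
- by rewrite -e2 h1.
- by rewrite e1 h2.
- apply/orP; right; rewrite e1 e2 eqxx /=.
  case/orP: h1 => [p1 | /andP[/eqP q1 i1]]; case/orP: h2 => [p2 | /andP[/eqP q2 i2]].
  + by rewrite (lt_trans p2 p1).
  + by rewrite q2 p1.
  + by rewrite -q1 p2.
  + by rewrite q2 q1 eqxx (ltn_trans i1 i2) orbT.
Qed.

Lemma lex_irr (R : realType) (d : nat) (L : 'I_d -> nat) (P : 'I_d -> R) a :
  lexrel L P a a = false.
Proof. by rewrite /lexrel ltnn ltxx /= ltnn !andbF. Qed.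

Lemma lex_total (R : realType) (d : nat) (L : 'I_d -> nat) (P : 'I_d -> R) a b :
  a != b -> lexrel L P a b || lexrel L P b a.
Proof.
move=> ab; rewrite /lexrel.
case: (ltngtP (L a) (L b)) => hL //=.
case: (ltgtP (P a) (P b)) => hP //=; rewrite ?orbT //.
case: (ltngtP a b) => h //=; rewrite ?orbT //.
by move/val_inj: h => h; rewrite h eqxx in ab.
Qed.

Lemma exists_sorting (d : nat) (rel : rel 'I_d) :
  (forall a, rel a a = false) ->
  (forall a b c, rel a b -> rel b c -> rel a c) ->
  (forall a b, a != b -> rel a b || rel b a) ->
  exists s : {perm 'I_d}, forall a b : 'I_d, (a < b)%N -> rel (s a) (s b).
Proof.
move=> irr tr tot.
pose S k : {set 'I_d} := [set m | rel m k]%SET.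
pose rank k := #|S k|.
have rlt k : (rank k < d)%N.
  have : S k \proper [set: 'I_d]%SET.
    rewrite properT; apply/eqP => e.
    have : k \in S k by rewrite e inE.
    by rewrite inE irr.
  by move/proper_card; rewrite cardsT card_ord.
have mono k m : rel k m -> (rank k < rank m)%N.
  move=> km; apply: (@proper_card _ (S k) (S m)); apply/properP; split.
    apply/fintype.subsetP => x; rewrite !inE => xk; exact: tr xk km.
  by exists k; rewrite !inE ?irr ?km.
pose f k := Ordinal (rlt k).
have finj : injective f.
  move=> k m /(congr1 val) /= e; apply/eqP; apply/negPn/negP => km.
  case/orP: (tot _ _ km) => /mono; by rewrite e ltnn.
pose rho := perm finj.
exists rho^-1%g => a b ab.
set x := (rho^-1)%g a; set y := (rho^-1)%g b.
have fx : f x = a by rewrite /x -(permE finj) permKV.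
have fy : f y = b by rewrite /y -(permE finj) permKV.
have xy : x != y by apply/eqP => e; move: ab; rewrite -fx -fy e ltnn.
case/orP: (tot _ _ xy) => // /mono.
by rewrite -[rank y]/(val (f y)) -[rank x]/(val (f x)) fx fy ltnNge (ltnW ab).
Qed.

Lemma sigma_of_ordered (R : realType) (N d : nat) (lam : 'I_N -> 'I_d -> R) w r :
  sigma_ordered lam w r (sigma_of lam w r).
Proof.
have [s hs] := exists_sorting (@lex_irr R d (Lnum lam w r) (fun x => prodL lam w x (Lnum lam w r x)))
   (@lex_trans _ _ _ _) (@lex_total _ _ _ _).
have so : sigma_ordered lam w r s.
  apply/forallP => a; apply/forallP => b; apply/implyP => ab.
  by rewrite precE; apply: hs.
rewrite /sigma_of; case: pickP => [s' // | none].
by rewrite none in so.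
Qed.

Lemma sigma_L (R : realType) (N d : nat) (lam : 'I_N -> 'I_d -> R) w r (a b : 'I_d) :
  (a <= b)%N -> (Lnum lam w r (sigma_of lam w r b) <= Lnum lam w r (sigma_of lam w r a))%N.
Proof.
rewrite leq_eqVlt => /orP [/eqP e | ab].
  by have -> : a = b by apply: val_inj.
have := sigma_of_ordered lam w r => /forallP /(_ a) /forallP /(_ b) /implyP /(_ ab).
rewrite precE /lexrel => /orP [h | /andP[/eqP -> _]] //.
exact: ltnW.
Qed.

Lemma agree (R : realType) (N d : nat) (lam t : 'I_N -> 'I_d -> R) v w k l :
  (forall l', (l' < l)%N -> lam (v l') k = lam (w l') k /\ t (v l') k = t (w l') k) ->
  prodL lam v k l = prodL lam w k l /\
  comp lam t v l (fun _ => 0) k = comp lam t w l (fun _ => 0) k.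
Proof.
elim: l => [|l IH] H; first by rewrite !prodL0.
have [e1 e2] := IH (fun l' h => H l' (ltnW h)).
have [f1 f2] := H l (ltnSn l).
rewrite !prodLS /= comp_coord [comp _ _ w _ _ _]comp_coord /fmap e1 e2 f1 f2.
by split.
Qed.

Lemma inE_self (d : nat) (s : {perm 'I_d}) (a : 'I_d) : inE_ s a.+1 (s a).
Proof. by apply/existsP; exists a; rewrite ltnSn eqxx. Qed.

Lemma coord_bound (R : realType) (N d : nat) (lam t : 'I_N -> 'I_d -> R) w r v k :
  (forall i k, 0 < lam i k < 1) ->
  (forall i, fmap lam t i @` (@cube R d) `<=` (@cube R d)) ->
  0 < r -> Bset lam t w r v ->
  `|pi_map lam t v k - pi_map lam t w k| <= r.
Proof.
move=> Hl Hc r0 Bv.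
set s := sigma_of lam w r.
pose a := (s^-1)%g k.
have ska : s a = k by rewrite /a permKV.
set L := Lnum lam w r (s a).
have ov l : (l < L)%N -> lam (v l) k = lam (w l) k /\ t (v l) k = t (w l) k.
  move=> lL.
  have e := Bv a l lL.
  have o : overlap lam t s a.+1 (v l) (w l).
    apply: ov_trans (ov_sym (projIdx_ov lam t s a.+1 (v l))) _.
    rewrite [projIdx _ _ _ _ (v l)](_ : _ = projIdx lam t s a.+1 (w l)) //.
    exact: projIdx_ov.
  by apply: (ov_coord o); rewrite -ska inE_self.
have [eP eC] := agree ov.
rewrite (pi_shift v k L Hl Hc) (pi_shift w k L Hl Hc) eP eC.
have PL : prodL lam w k L <= r by rewrite /L ska; exact: Lnum_le.
have P0 := prodL_gt0 w k L Hl.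
have [_ /andP[x0 x1] _] := pi_props (shiftw v L) k Hl Hc.
have [_ /andP[y0 y1] _] := pi_props (shiftw w L) k Hl Hc.
rewrite ler_norml; apply/andP; split; nra.
Qed.

Lemma part1 (R : realType) (N d : nat) (lam t : 'I_N -> 'I_d -> R) w r :
  (forall i k, 0 < lam i k < 1) ->
  (forall i, fmap lam t i @` (@cube R d) `<=` (@cube R d)) ->
  0 < r ->
  pi_map lam t @` Bset lam t w r `<=` ball_e (pi_map lam t w) (Num.sqrt (d%:R) * r).
Proof.
move=> Hl Hc r0 _ [v Bv <-]; rewrite /ball_e /enorm /=.
have -> : Num.sqrt (d%:R) * r = Num.sqrt (d%:R * r ^+ 2).
  by rewrite sqrtrM ?ler0n // sqrtr_sqr ger0_norm // ltW.
apply: ler_wsqrtr.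
apply: (@le_trans _ _ (\sum_(k < d) r ^+ 2)).
  apply: ler_sum => k _.
  have := coord_bound k Hl Hc r0 Bv.
  rewrite ler_norml => /andP[h1 h2]; nra.
by rewrite sumr_const card_ord mulr_natl.
Qed.

Lemma cbound (R : realType) (d : nat) (F : set ('I_d -> R)) (c : 'I_d) :
  compact (F : set {ptws 'I_d -> R}) -> exists B : R, forall y, F y -> `|y c| <= B.
Proof.
move=> cF.
have hc : continuous (fun f : {ptws 'I_d -> R} => f c).
  exact: (@proj_continuous 'I_d (fun _ => R) c).
have := continuous_compact (continuous_subspaceT hc) cF.
move=> /compact_bounded [M [_ HM]].
exists (`|M| + 1) => y Fy.
have := HM (`|M|+1) _ (y c).
apply.
  by apply: (le_lt_trans (ler_norm M)); rewrite ltrDl.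
by exists y.
Qed.

Lemma pi_step (R : realType) (N d : nat) (lam t : 'I_N -> 'I_d -> R) w k l :
  (forall i k, 0 < lam i k < 1) ->
  (forall i, fmap lam t i @` (@cube R d) `<=` (@cube R d)) ->
  pi_map lam t w k = prodL lam w k l * fmap lam t (w l) (pi_map lam t (shiftw w l.+1)) k
                     + comp lam t w l (fun _ => 0) k.
Proof.
move=> Hl Hc.
rewrite (pi_shift w k l.+1 Hl Hc) prodLS /= comp_coord /fmap; ring.
Qed.

Lemma coding (R : realType) (N d : nat) (lam t : 'I_N -> 'I_d -> R) (F : set ('I_d -> R)) y :
  (forall i k, 0 < lam i k < 1) ->
  (forall i, fmap lam t i @` (@cube R d) `<=` (@cube R d)) ->
  is_attractor lam t F -> F y -> exists v, pi_map lam t v = y.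
Proof.
move=> Hl Hc [_ [cF eF]] Fy.
have step : forall z : {z | F z}, exists p : 'I_N * {z | F z},
    sval z = fmap lam t p.1 (sval p.2).
  move=> [z Fz] /=.
  move: Fz; rewrite {1}eF => -[i _ [z' Fz' <-]].
  by exists (i, exist _ z' Fz').
have [g hg] := choice step.
pose Y m := iter m (fun z => (g z).2) (exist _ y Fy).
pose v m := (g (Y m)).1.
have Hy m : y = comp lam t v m (sval (Y m)).
  elim: m => [|m IH] //=.
  by rewrite IH -hg.
exists v; apply: funext => c.
have [B HB] := cbound c cF.
have B0 : 0 <= B by apply: le_trans (HB _ Fy).
apply/eqP; rewrite -subr_eq0 -normr_le0.
apply/ler_addgt0Pr => e e0; rewrite add0r.
have [m Hm] := prodL_small v c (Hl) (divr_gt0 e0 (ltr_wpDl B0 ltr01)).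
rewrite (pi_shift v c m Hl Hc) (Hy m) [comp _ _ v m (sval _) c]comp_coord.
have [_ /andP[x0 x1] _] := pi_props (shiftw v m) c Hl Hc.
have := HB _ (svalP (Y m)); rewrite ler_norml => /andP[b1 b2].
have P0 := prodL_gt0 v c m Hl.
rewrite ler_pdivlMr ?ltr_wpDl // in Hm.
set P := prodL lam v c m in Hm P0 *.
set x := pi_map _ _ _ c; set C := comp _ _ _ _ _ c; set Yc := sval (Y m) c.
have -> : P * x + C - (P * Yc + C) = P * (x - Yc) by ring.
rewrite normrM (ger0_norm (ltW P0)).
apply: le_trans Hm; apply: ler_wpM2l; first exact: ltW.
rewrite ler_norml /x /Yc; apply/andP; split; lra.
Qed.

Lemma sqrt_le_sq (R : realType) (S c : R) : 0 <= S -> Num.sqrt S <= c -> S <= c ^+ 2.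
Proof.
move=> S0 h; have q0 := sqrtr_ge0 S; have := sqr_sqrtr S0.
move=> e; rewrite -e; nra.
Qed.

Lemma sq_le_sqrt (R : realType) (S c : R) : 0 <= S -> 0 <= c -> c <= Num.sqrt S -> c ^+ 2 <= S.
Proof.
move=> S0 c0 h; have q0 := sqrtr_ge0 S; have := sqr_sqrtr S0.
move=> e; rewrite -e; nra.
Qed.

Lemma part2_word (R : realType) (N d : nat) (lam t : 'I_N -> 'I_d -> R) w r v delta0 :
  (forall i k, 0 < lam i k < 1) ->
  (forall i, fmap lam t i @` (@cube R d) `<=` (@cube R d)) ->
  0 < delta0 -> sep_const lam t delta0 -> 0 < r ->
  enorm (fun k => pi_map lam t v k - pi_map lam t w k) <= delta0 * r ->
  Bset lam t w r v.
Proof.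
move=> Hl Hc d0 Hsep r0 Hball a.
set s := sigma_of lam w r.
set L := Lnum lam w r (s a).
suff H : forall l, (l < L)%N -> overlap lam t s a.+1 (v l) (w l).
  by move=> l lL; rewrite /projW; apply: projIdx_eq; apply: H.
elim/ltn_ind => l IH lL.
case: (pselect (overlap lam t s a.+1 (v l) (w l))) => // nov; exfalso.
have As : Acal lam s by exists w, r.
have n1 : (1 <= a.+1 <= d)%N by rewrite /= ltn_ord.
set x := pi_map lam t (shiftw v l.+1).
set x' := pi_map lam t (shiftw w l.+1).
have cx : (@cube R d) x by move=> k; have [_ h _] := pi_props (shiftw v l.+1) k Hl Hc.
have cx' : (@cube R d) x' by move=> k; have [_ h _] := pi_props (shiftw w l.+1) k Hl Hc.
have hsep := Hsep s As a.+1 n1 (v l) (w l) nov x x' cx cx'.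
set u := fun k => projE s a.+1 (fmap lam t (v l) x) k - projE s a.+1 (fmap lam t (w l) x') k.
set z := fun k => pi_map lam t v k - pi_map lam t w k.
have key k : inE_ s a.+1 k -> z k = prodL lam w k l * u k /\ r < prodL lam w k l.
  move=> kE.
  have ag : forall l', (l' < l)%N -> lam (v l') k = lam (w l') k /\ t (v l') k = t (w l') k.
    move=> l' ll'; apply: (ov_coord (IH l' ll' (ltn_trans ll' lL)) kE).
  have [eP eC] := agree ag.
  split.
    rewrite /z (pi_step v k l Hl Hc) (pi_step w k l Hl Hc) eP eC /u /projE kE -/x -/x'; ring.
  case/existsP: kE => b /andP[bn /eqP sb].
  apply: Lnum_min; rewrite -sb.
  apply: (leq_trans lL); apply: sigma_L; by rewrite -ltnS.
have u0 k : ~~ inE_ s a.+1 k -> u k = 0.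
  by move=> nk; rewrite /u /projE (negbTE nk) subrr.
have Sz : \sum_(k < d) z k ^+ 2 <= (delta0 * r) ^+ 2.
  by apply: sqrt_le_sq => //; apply: sumr_ge0 => k _; exact: sqr_ge0.
have Su : delta0 ^+ 2 <= \sum_(k < d) u k ^+ 2.
  apply: sq_le_sqrt => //; [apply: sumr_ge0 => k _; exact: sqr_ge0 | exact: ltW].
have [k0 uk0] : exists k0, u k0 != 0.
  apply/not_existsP => hn.
  have : \sum_(k < d) u k ^+ 2 = 0.
    apply: big1 => k _; have := hn k; move/negP; rewrite negbK => /eqP ->.
    by rewrite expr0n.
  move=> e; rewrite e in Su; nra.
have term k : 0 <= z k ^+ 2 - r ^+ 2 * u k ^+ 2.
  case kE: (inE_ s a.+1 k).
    have [-> hr] := key k kE.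
    rewrite exprMn -mulrBl; apply: mulr_ge0; last exact: sqr_ge0.
    rewrite subr_ge0; nra.
  by rewrite u0 ?kE // expr0n /= mulr0 subr0 sqr_ge0.
have k0E : inE_ s a.+1 k0.
  by case kE: (inE_ s a.+1 k0) => //; move: uk0; rewrite u0 ?kE // eqxx.
have t0 : 0 < z k0 ^+ 2 - r ^+ 2 * u k0 ^+ 2.
  have [-> hr] := key k0 k0E.
  have up : 0 < u k0 ^+ 2 by rewrite lt_def sqrf_eq0 uk0 sqr_ge0.
  rewrite exprMn -mulrBl; apply: mulr_gt0 => //; rewrite subr_gt0; nra.
have : 0 < \sum_(k < d) (z k ^+ 2 - r ^+ 2 * u k ^+ 2).
  rewrite (bigD1 k0) //=.
  have : 0 <= \sum_(k < d | k != k0) (z k ^+ 2 - r ^+ 2 * u k ^+ 2).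
    by apply: sumr_ge0 => k _.
  lra.
rewrite sumrB -mulr_sumr.
nra.
Qed.

Unset Implicit Arguments. Set Strict Implicit.

Theorem lemma6p1 (R : realType) (N d : nat) (lam t : 'I_N -> 'I_d -> R)
    (F : set ('I_d -> R)) :
  sponge_hyp lam t -> is_attractor lam t F -> SPPC lam t ->
  (forall (w : nat -> 'I_N) (r : R), 0 < r ->
     pi_map lam t @` Bset lam t w r `<=`
       ball_e (pi_map lam t w) (Num.sqrt (d%:R) * r)) /\
  (very_strong_SPPC lam t -> forall delta0 : R, 0 < delta0 ->
     sep_const lam t delta0 ->
     forall (w : nat -> 'I_N) (r : R), 0 < r ->
       ball_e (pi_map lam t w) (delta0 * r) `&` F `<=` pi_map lam t @` Bset lam t w r).
Proof.
move=> [Hl [Hc _]] HF _; split.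
  by move=> w r r0; apply: part1.
move=> _ delta0 d0 Hsep w r r0 y [By Fy].
have [v ev] := coding Hl Hc HF Fy.
exists v => //.
apply: (part2_word Hl Hc d0 Hsep r0).
by rewrite ev.
Qed.
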